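(* Let $\Gamma$ be a $\Bbbk$-algebra. Then $\Gamma$ is quasicommutative if and only if every finite-dimensional $\Gamma$-module $V$ is a generalized weight module, i.e. $V=\bigoplus_{\mathfrak m\in\mathrm{cfs}(\Gamma)}V(\mathfrak m)$ where $V(\mathfrak m)=\{v\in V:\mathfrak m^kv=0\text{ for some }k\ge0\}$.
   Context: $\mathrm{cfs}(\Gamma)$: maximal two-sided ideals $\mathfrak m$ of $\Gamma$ with $\dim\Gamma/\mathfrak m<\infty$; $S_{\mathfrak m}$ is the unique simple $\Gamma/\mathfrak m$-module. $\Gamma$ is quasicommutative if $\mathrm{Ext}^1_\Gamma(S_{\mathfrak m},S_{\mathfrak n})=0$ for all distinct $\mathfrak m,\mathfrak n\in\mathrm{cfs}(\Gamma)$. *)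

(* Defs.v *)
From HB Require Import structures.
From mathcomp Require Import all_boot all_order all_algebra.
Set Implicit Arguments. Unset Strict Implicit. Unset Printing Implicit Defensive.
Import GRing.Theory.
Local Open Scope ring_scope.

Section QC.
Variables (k : fieldType) (G : algType k).

Definition ideal (I : G -> Prop) : Prop :=
  [/\ I 0, (forall x y, I x -> I y -> I (x + y))
    & (forall a x, I x -> I (a * x) /\ I (x * a))].

Definition same_set (I J : G -> Prop) : Prop := forall x, I x <-> J x.

Definition max_ideal (I : G -> Prop) : Prop :=
  [/\ ideal I, ~ (forall x, I x)
    & forall J, ideal J -> (forall x, I x -> J x) ->
        same_set J I \/ (forall x, J x)].

Definition fin_codim (I : G -> Prop) : Prop :=
  exists d (b : 'I_d -> G), forall x, exists c : 'I_d -> k,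
    I (x - \sum_(i < d) c i *: b i).

Definition cfs (I : G -> Prop) : Prop := max_ideal I /\ fin_codim I.

Inductive idmul (I J : G -> Prop) : G -> Prop :=
  | idmul0 : idmul I J 0
  | idmul_prod a b : I a -> J b -> idmul I J (a * b)
  | idmul_add x y : idmul I J x -> idmul I J y -> idmul I J (x + y).

Fixpoint idpow (I : G -> Prop) (n : nat) : G -> Prop :=
  match n with
  | 0 => fun _ => True
  | n'.+1 => idmul I (idpow I n')
  end.

(* a finite-dimensional G-module: k^n (column vectors) with an algebra
   morphism rho : G -> 'M_n, gamma acting by v |-> rho gamma *m v *)
Definition is_rep n (rho : G -> 'M[k]_n) : Prop :=
  [/\ forall (a : k) x y, rho (a *: x + y) = a *: rho x + rho y,
      rho 1 = 1%:M
    & forall x y, rho (x * y) = rho x *m rho y].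

Definition gwspace n (rho : G -> 'M[k]_n) (m : G -> Prop) (v : 'cV[k]_n) : Prop :=
  exists e : nat, forall x, idpow m e x -> rho x *m v = 0.

Definition gen_weight n (rho : G -> 'M[k]_n) : Prop :=
  (forall v : 'cV[k]_n, exists l (ms : 'I_l -> G -> Prop) (ws : 'I_l -> 'cV[k]_n),
      (forall i, cfs (ms i) /\ gwspace rho (ms i) (ws i)) /\ v = \sum_(i < l) ws i)
  /\
  (forall l (ms : 'I_l -> G -> Prop) (ws : 'I_l -> 'cV[k]_n),
      (forall i j, i != j -> ~ same_set (ms i) (ms j)) ->
      (forall i, cfs (ms i) /\ gwspace rho (ms i) (ws i)) ->
      \sum_(i < l) ws i = 0 -> forall i, ws i = 0).

Definition submodule n (rho : G -> 'M[k]_n) (P : 'cV[k]_n -> Prop) : Prop :=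
  [/\ P 0, (forall (a : k) u v, P u -> P v -> P (a *: u + v))
    & forall x v, P v -> P (rho x *m v)].

Definition simple_rep n (rho : G -> 'M[k]_n) : Prop :=
  [/\ is_rep rho, (0 < n)%N
    & forall P, submodule rho P ->
        (forall v, P v -> v = 0) \/ (forall v, P v)].

Definition annihilated n (rho : G -> 'M[k]_n) (m : G -> Prop) : Prop :=
  forall x, m x -> rho x = 0.

(* Ext^1_G(S_m, S_n) = 0 (Yoneda description): every extension
   0 -> S_n -> E -> S_m -> 0 splits.  E = k^(q+p) with S_n = first q
   coordinates (a submodule) and quotient S_m on the last p coordinates. *)
Definition ext1_zero (m n : G -> Prop) : Prop :=
  forall p q (rm : G -> 'M[k]_p) (rn : G -> 'M[k]_q),
    simple_rep rm -> annihilated rm m ->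
    simple_rep rn -> annihilated rn n ->
    forall c : G -> 'M[k]_(q, p),
      is_rep (fun x => block_mx (rn x) (c x) 0 (rm x)) ->
      exists s : 'M[k]_(q + p, p),
        (forall x, block_mx (rn x) (c x) 0 (rm x) *m s = s *m rm x)
        /\ dsubmx s = 1%:M.

Definition quasicommutative : Prop :=
  forall m n, cfs m -> cfs n -> ~ same_set m n -> ext1_zero m n.

End QC.

(* Main.v *)
Require Import Defs.
From mathcomp Require Import all_boot all_order all_algebra.
From mathcomp Require Import ring.
From mathcomp Require Import zify.
From Stdlib Require Import Classical ClassicalEpsilon.
Set Implicit Arguments. Unset Strict Implicit. Unset Printing Implicit Defensive.
Import GRing.Theory.
Local Open Scope ring_scope.


Section Ideals.
Variables (k : fieldType) (G : algType k).
Implicit Types (I J m M : G -> Prop) (x y a b : G).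

Lemma idl0 I : ideal I -> I 0. Proof. by case. Qed.
Lemma idlD I x y : ideal I -> I x -> I y -> I (x + y). Proof. by case=> _ H _; apply: H. Qed.
Lemma idlMl I a x : ideal I -> I x -> I (a * x). Proof. by case=> _ _ H Hx; case: (H a x Hx). Qed.
Lemma idlMr I a x : ideal I -> I x -> I (x * a). Proof. by case=> _ _ H Hx; case: (H a x Hx). Qed.
Lemma idlZ I (c : k) x : ideal I -> I x -> I (c *: x).
Proof. by move=> hI Hx; rewrite -[x]mul1r scalerAl; apply: idlMl. Qed.
Lemma idlN I x : ideal I -> I x -> I (- x).
Proof. by move=> hI Hx; rewrite -mulN1r; apply: idlMl. Qed.
Lemma idlB I x y : ideal I -> I x -> I y -> I (x - y).
Proof. by move=> hI Hx Hy; apply: idlD => //; apply: idlN. Qed.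
Lemma idl_sum I d (F : 'I_d -> G) : ideal I -> (forall i, I (F i)) -> I (\sum_(i < d) F i).
Proof. by move=> hI HF; elim/big_ind: _ => //; [apply: idl0 | move=> *; apply: idlD]. Qed.
Lemma idl_all I : ideal I -> I 1 -> forall x, I x.
Proof. by move=> hI H1 x; rewrite -[x]mulr1; apply: idlMl. Qed.

Lemma idmul_subr I J x : ideal J -> idmul I J x -> J x.
Proof.
move=> hJ; elim=> [|a b _ Jb|u v _ Hu _ Hv]; first exact: idl0.
  exact: idlMl. exact: idlD.
Qed.
Lemma idmul_subl I J x : ideal I -> idmul I J x -> I x.
Proof.
move=> hI; elim=> [|a b Ia _|u v _ Hu _ Hv]; first exact: idl0.
  exact: idlMr. exact: idlD.
Qed.
Lemma idmul_ideal I J : ideal I -> ideal J -> ideal (idmul I J).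
Proof.
move=> hI hJ; split; first exact: idmul0.
  by move=> x y; apply: idmul_add.
move=> c x; elim=> [|a b Ia Jb|u v _ [Hu1 Hu2] _ [Hv1 Hv2]].
- by rewrite mulr0 mul0r; split; apply: idmul0.
- split; first by rewrite mulrA; apply: idmul_prod => //; apply: idlMl.
  by rewrite -mulrA; apply: idmul_prod => //; apply: idlMr.
- by rewrite mulrDr mulrDl; split; apply: idmul_add.
Qed.
Lemma idpow_ideal m e : ideal m -> ideal (idpow m e).
Proof.
move=> hm; elim: e => [|e IH] /=; last exact: idmul_ideal.
by split.
Qed.
Lemma idpowS_sub m e x : ideal m -> idpow m e.+1 x -> idpow m e x.
Proof. by move=> hm /=; apply: idmul_subr; apply: idpow_ideal. Qed.
Lemma idpow_mono m e e' x : ideal m -> (e <= e')%N -> idpow m e' x -> idpow m e x.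
Proof.
move=> hm; elim: e' => [|e' IH]; first by rewrite leqn0 => /eqP ->.
rewrite leq_eqVlt => /orP [/eqP -> //| le] H.
by apply: IH => //; apply: idpowS_sub.
Qed.
Lemma idpow1 m x : ideal m -> idpow m 1 x -> m x.
Proof. by move=> hm /=; apply: idmul_subl. Qed.
Lemma idpow1' m x : m x -> idpow m 1 x.
Proof. by move=> Hx; rewrite -[x]mulr1; apply: idmul_prod. Qed.
Lemma idpow_same m m' e x : same_set m m' -> idpow m e x -> idpow m' e x.
Proof.
move=> hs; elim: e x => [//|e IH] x /=.
elim=> [|a b Ia Jb|u v _ Hu _ Hv]; first exact: idmul0.
  by apply: idmul_prod; [apply/hs | apply: IH].
exact: idmul_add.
Qed.

Lemma max_proper M : max_ideal M -> ~ M 1.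
Proof. by case=> hM Hp _ H1; apply: Hp; apply: idl_all. Qed.

Definition sumI I J : G -> Prop := fun x => exists i y, I i /\ J y /\ x = i + y.

Lemma sumI_ideal I J : ideal I -> ideal J -> ideal (sumI I J).
Proof.
move=> hI hJ; split.
- by exists 0, 0; rewrite addr0; split; [apply: idl0|split; [apply: idl0|]].
- move=> x y [i1 [y1 [I1 [J1 ->]]]] [i2 [y2 [I2 [J2 ->]]]].
  exists (i1 + i2), (y1 + y2); split; first exact: idlD.
  split; first exact: idlD.
  by rewrite addrACA.
- move=> a x [i1 [y1 [I1 [J1 ->]]]]; split.
    exists (a * i1), (a * y1); rewrite mulrDr; split; first exact: idlMl.
    by split => //; apply: idlMl.
  exists (i1 * a), (y1 * a); rewrite mulrDl; split; first exact: idlMr.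
  by split => //; apply: idlMr.
Qed.

Lemma max_absorb M I a : max_ideal M -> ideal I -> I a -> ~ M a ->
  exists i y, I i /\ M y /\ 1 = i + y.
Proof.
move=> [hM Hp Hmax] hI Ia Ma.
have hS := sumI_ideal hI hM.
have sub : forall x, M x -> sumI I M x.
  move=> x Mx; exists 0, x; rewrite add0r; split => //; exact: idl0.
case: (Hmax _ hS sub) => [hs|hall].
  exfalso; apply: Ma; apply/hs; exists a, 0; rewrite addr0; split => //.
  by split => //; apply: idl0.
by case: (hall 1) => i [y [Ii [My E]]]; exists i, y.
Qed.

Lemma max_prime M I J : max_ideal M -> ideal I -> ideal J ->
  (forall x, idmul I J x -> M x) ->
  (forall x, I x -> M x) \/ (forall x, J x -> M x).
Proof.
move=> hM hI hJ HIJ.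
case: (classic (forall x, I x -> M x)) => [|nI]; first by left.
case: (classic (forall x, J x -> M x)) => [|nJ]; first by right.
exfalso.
have [a [Ia Ma]] : exists a, I a /\ ~ M a.
  apply: NNPP => H; apply: nI => x Ix; apply: NNPP => Mx; apply: H; by exists x.
have [b [Jb Mb]] : exists b, J b /\ ~ M b.
  apply: NNPP => H; apply: nJ => x Jx; apply: NNPP => Mx; apply: H; by exists x.
have hM' := hM; case: hM' => hMi _ _.
have [i [y [Ii [My E1]]]] := max_absorb hM hI Ia Ma.
have [j [z [Jj [Mz E2]]]] := max_absorb hM hJ Jb Mb.
apply: (max_proper hM).
have -> : (1 : G) = i * j + (i * z + (y * j + y * z)).
  by rewrite -[1 in LHS]mulr1 {1}E1 {1}E2 mulrDl !mulrDr !addrA.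
apply: idlD => //; first by apply: HIJ; apply: idmul_prod.
apply: idlD => //; first exact: idlMl.
by apply: idlD => //; apply: idlMr.
Qed.

Lemma max_pow M m e : max_ideal M -> ideal m ->
  (forall x, idpow m e x -> M x) -> forall x, m x -> M x.
Proof.
move=> hM hm; elim: e => [|e IH] H.
  by move=> x _; exfalso; apply: (max_proper hM); apply: H.
case: (max_prime hM hm (idpow_ideal e hm) H) => H'; first by [].
by apply: IH.
Qed.

Lemma max_sub_same m n : max_ideal m -> max_ideal n ->
  (forall x, n x -> m x) -> same_set m n.
Proof.
move=> hm [hn _ Hmax] sub.
case: hm => him Hp _.
case: (Hmax m him sub) => // hall; by exfalso; apply: Hp.
Qed.

Lemma comax m n : max_ideal m -> max_ideal n -> ~ same_set m n ->
  forall e1 e2, exists x y, idpow m e1 x /\ idpow n e2 y /\ x + y = 1.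
Proof.
move=> hm hn hmn e1 e2.
have him : ideal m by case: hm.
have hin : ideal n by case: hn.
have hQ := idpow_ideal e2 hin.
have [q0 [Qq0 Mq0]] : exists q0, idpow n e2 q0 /\ ~ m q0.
  apply: NNPP => H; apply: hmn; apply: max_sub_same => //.
  apply: (max_pow hm hin (e:=e2)) => x Qx; apply: NNPP => Mx; apply: H; by exists x.
have [q [x0 [Qq [Mx0 E]]]] := max_absorb hm hQ Qq0 Mq0.
elim: e1 => [|e1 [x [y [Hx [Hy Hxy]]]]].
  by exists 1, 0; rewrite addr0; split => //; split => //; apply: idl0.
exists (x0 * x), (x0 * y + q * (x + y)); split; first exact: idmul_prod.
split.
  apply: idlD => //; first exact: idlMl.
  exact: idlMr.
by rewrite mulrDr addrA -mulrDr Hxy !mulr1 -mulrDr Hxy mulr1 addrC -E.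
Qed.

End Ideals.


Section Rep.
Variables (k : fieldType) (G : algType k) (n : nat) (rho : G -> 'M[k]_n).
Hypothesis Hr : is_rep rho.

Lemma rep0 : rho 0 = 0.
Proof.
case: Hr => H _ _; have := H 1 0 0; rewrite !scale1r addr0 => E.
have E2 : rho 0 + rho 0 = rho 0 + 0 by rewrite addr0 -E.
exact: (addrI _ E2).
Qed.
Lemma repD x y : rho (x + y) = rho x + rho y.
Proof. by case: Hr => H _ _; have := H 1 x y; rewrite !scale1r. Qed.
Lemma repZ (c : k) x : rho (c *: x) = c *: rho x.
Proof. by case: Hr => H _ _; have := H c x 0; rewrite !addr0 rep0 addr0. Qed.
Lemma repN x : rho (- x) = - rho x.
Proof. by rewrite -scaleN1r repZ scaleN1r. Qed.
Lemma repB x y : rho (x - y) = rho x - rho y.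
Proof. by rewrite repD repN. Qed.
Lemma rep1 : rho 1 = 1%:M. Proof. by case: Hr. Qed.
Lemma repM x y : rho (x * y) = rho x *m rho y. Proof. by case: Hr. Qed.
Lemma rep_sum d (F : 'I_d -> G) : rho (\sum_(i < d) F i) = \sum_(i < d) rho (F i).
Proof. exact: (big_morph rho repD rep0). Qed.

Lemma gws0 m : gwspace rho m 0.
Proof. by exists 0%N => x _; rewrite mulmx0. Qed.
Lemma gwsD m u w : ideal m -> gwspace rho m u -> gwspace rho m w -> gwspace rho m (u + w).
Proof.
move=> hm [e1 H1] [e2 H2]; exists (e1 + e2)%N => x Hx.
rewrite mulmxDr H1 ?H2 ?addr0 //; apply: idpow_mono Hx => //.
  exact: leq_addl.
exact: leq_addr.
Qed.
Lemma gwsZ m (c : k) u : gwspace rho m u -> gwspace rho m (c *: u).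
Proof. by move=> [e H]; exists e => x Hx; rewrite -scalemxAr H // scaler0. Qed.
Lemma gwsN m u : gwspace rho m u -> gwspace rho m (- u).
Proof. by move=> H; rewrite -scaleN1r; apply: gwsZ. Qed.
Lemma gwsB m u w : ideal m -> gwspace rho m u -> gwspace rho m w -> gwspace rho m (u - w).
Proof. by move=> hm Hu Hw; apply: gwsD => //; apply: gwsN. Qed.
Lemma gwsM m y u : ideal m -> gwspace rho m u -> gwspace rho m (rho y *m u).
Proof.
move=> hm [e H]; exists e => x Hx; rewrite mulmxA -repM H //.
by apply: (idlMr (I := idpow m e)) => //; apply: idpow_ideal.
Qed.
Lemma gws_sum m d (F : 'I_d -> 'cV[k]_n) : ideal m -> (forall i, gwspace rho m (F i)) ->
  gwspace rho m (\sum_(i < d) F i).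
Proof.
by move=> hm HF; elim/big_ind: _ => //; [apply: gws0 | move=> *; apply: gwsD].
Qed.
Lemma gws_sumP m d (P : pred 'I_d) (F : 'I_d -> 'cV[k]_n) : ideal m ->
  (forall i, P i -> gwspace rho m (F i)) ->
  gwspace rho m (\sum_(i < d | P i) F i).
Proof.
by move=> hm HF; elim/big_ind: _ => //; [apply: gws0 | move=> *; apply: gwsD].
Qed.
Lemma gws_same m m' u : same_set m m' -> gwspace rho m u -> gwspace rho m' u.
Proof.
move=> hs [e H]; exists e => x Hx; apply: H; apply: idpow_same Hx.
by move=> z; split => /hs.
Qed.
Lemma gws_kill m m' u : max_ideal m -> max_ideal m' -> ~ same_set m m' ->
  gwspace rho m u -> gwspace rho m' u -> u = 0.
Proof.
move=> hm hm' hs [e1 H1] [e2 H2].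
have [x [y [Hx [Hy E]]]] := comax hm hm' hs e1 e2.
by rewrite -[u]mul1mx -rep1 -E repD mulmxDl H1 // H2 // addr0.
Qed.

Lemma gw_direct l (ms : 'I_l -> G -> Prop) (ws : 'I_l -> 'cV[k]_n) :
  (forall i j, i != j -> ~ same_set (ms i) (ms j)) ->
  (forall i, max_ideal (ms i) /\ gwspace rho (ms i) (ws i)) ->
  \sum_(i < l) ws i = 0 -> forall i, ws i = 0.
Proof.
elim: l ms ws => [|l IH] ms ws Hd Hw Hs i; first by case: i.
have [hmax [e He]] := Hw ord_max.
have Hs' : \sum_(j < l) ws (lift ord_max j) = - ws ord_max.
  apply/eqP; rewrite -addr_eq0; apply/eqP; rewrite -[RHS]Hs big_ord_recr /=.
  congr (_ + _); apply: eq_bigr => j _; congr ws; apply: val_inj.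
  by rewrite /= /bump leqNgt ltn_ord.
have Hw' : forall j, ws (lift ord_max j) = 0.
  move=> j.
  have kill : forall y, idpow (ms ord_max) e y -> rho y *m ws (lift ord_max j) = 0.
    move=> y Hy.
    apply: (IH (fun j => ms (lift ord_max j)) (fun j => rho y *m ws (lift ord_max j))).
    - by move=> a b ab; apply: Hd; rewrite (inj_eq lift_inj).
    - move=> a; have [h1 h2] := Hw (lift ord_max a); split => //.
      by apply: gwsM => //; case: h1.
    - by rewrite -mulmx_sumr Hs' mulmxN He // oppr0.
  have [h1 h2] := Hw (lift ord_max j).
  apply: (gws_kill h1 hmax _ h2); last by exists e.
  by apply: Hd; rewrite eq_sym neq_lift.
case: (unliftP ord_max i) => [j ->|->]; first exact: Hw'.
apply/eqP; rewrite -oppr_eq0 -Hs'; apply/eqP; apply: big1 => j _; exact: Hw'.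
Qed.

End Rep.


Definition sameb (T : Type) (I J : T -> Prop) : bool :=
  if excluded_middle_informative (forall x, I x <-> J x) then true else false.

Lemma samebP (T : Type) (I J : T -> Prop) : sameb I J <-> (forall x, I x <-> J x).
Proof. by rewrite /sameb; case: excluded_middle_informative. Qed.

Lemma mx_eq_cols (R : fieldType) p q (A B : 'M[R]_(p, q)) :
  (forall j, A *m delta_mx j (0 : 'I_1) = B *m delta_mx j (0 : 'I_1)) -> A = B.
Proof.
move=> H; apply/matrixP => a j.
by have := congr1 (fun M : 'M_(p, 1) => M a 0) (H j); rewrite -!colE !mxE.
Qed.

Lemma col_sum_delta (R : fieldType) p (v : 'cV[R]_p) :
  v = \sum_(l < p) v l 0 *: delta_mx l 0.
Proof.
rewrite {1}(matrix_sum_delta v); apply: eq_bigr => l _.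
by rewrite big_ord1.
Qed.

Section DirC.
Variables (k : fieldType) (G : algType k).

Lemma dirC : (forall (n : nat) (rho : G -> 'M[k]_n), is_rep rho -> gen_weight rho) ->
  quasicommutative G.
Proof.
move=> Hgw m n cm cn hmn p q rm rn Srm Am Srn An c HE.
set E := fun x => block_mx (rn x) (c x) 0 (rm x).
have HE' : is_rep E by [].
have [Hgw1 _] := Hgw _ _ HE'.
have [Rm _ _] := Srm; have [Rn _ _] := Srn.
have mm : max_ideal m by case: cm.
have mn : max_ideal n by case: cn.
have im : ideal m by case: mm.
have dsubE : forall x (w : 'cV[k]_(q + p)), dsubmx (E x *m w) = rm x *m dsubmx w.
  move=> x w; rewrite -[w in E x *m w]vsubmxK /E mul_block_col col_mxKd.
  by rewrite mul0mx add0r.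
have Hu : forall j : 'I_p, exists u : 'cV[k]_(q + p),
    gwspace E m u /\ dsubmx u = delta_mx j (0:'I_1).
  move=> j; have [l [ms [ws [Hw Hv]]]] := Hgw1 (col_mx 0 (delta_mx j (0:'I_1))).
  exists (\sum_(i < l | sameb (ms i) m) ws i); split.
    apply: gws_sumP => // i /samebP Hs; have [_ Hg] := Hw i.
    exact: gws_same Hg.
  have : dsubmx (col_mx (0 : 'cV[k]_q) (delta_mx j (0:'I_1))) = delta_mx j (0:'I_1) by rewrite col_mxKd.
  rewrite Hv (bigID (fun i => sameb (ms i) m)) /= linearD /= => <-.
  suff -> : dsubmx (\sum_(i < l | ~~ sameb (ms i) m) ws i) = 0 by rewrite addr0.
  rewrite linear_sum big1 //.
  move=> i Hi; have [ci Hg] := Hw i.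
  have mi : max_ideal (ms i) by case: ci.
  apply: (gws_kill Rm mi mm).
  - by move=> hs; move/negP: Hi; apply; apply/samebP => x; split => /hs.
  - case: Hg => e He; exists e => x Hx; by rewrite -dsubE He // linear0.
  - by exists 1%N => x Hx; rewrite Am ?mul0mx //; apply: idpow1.
have [u Hu'] := fin_all_exists Hu.
pose s : 'M[k]_(q + p, p) := \matrix_(a, j) u j a 0.
have se : forall j, s *m delta_mx j (0:'I_1) = u j.
  by move=> j; rewrite -colE; apply/matrixP => a b; rewrite !mxE (ord1 b).
exists s; split; last first.
  apply: mx_eq_cols => j; rewrite mul_dsub_mx se mul1mx.
  by case: (Hu' j).
move=> x; apply: mx_eq_cols => j.
rewrite -!mulmxA se (col_sum_delta (rm x *m delta_mx j (0:'I_1))) mulmx_sumr.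
under eq_bigr => l _ do rewrite -scalemxAr se.
set d := E x *m u j - \sum_(l < p) (rm x *m delta_mx j (0:'I_1)) l 0 *: u l.
suff : d = 0 by move/eqP; rewrite subr_eq0 => /eqP.
have gd : gwspace E m d.
  apply: gwsB => //; first by apply: gwsM => //; case: (Hu' j).
  apply: gws_sum => // l; apply: gwsZ; by case: (Hu' l).
have d0 : dsubmx d = 0.
  rewrite /d linearB /= dsubE linear_sum /=.
  under eq_bigr => l _ do rewrite linearZ /= (proj2 (Hu' l)).
  by rewrite (proj2 (Hu' j)) -col_sum_delta subrr.
have usubE : forall y, usubmx (E y *m d) = rn y *m usubmx d.
  move=> y; rewrite -[d in E y *m d]vsubmxK d0 /E mul_block_col col_mxKu.
  by rewrite mulmx0 addr0.
have ud : usubmx d = 0.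
  apply: (gws_kill Rn mm mn hmn).
    case: gd => e He; exists e => y Hy; by rewrite -usubE He // linear0.
  by exists 1%N => y Hy; rewrite An ?mul0mx //; apply: idpow1 => //; case: mn.
by rewrite -[d]vsubmxK ud d0 col_mx0.
Qed.
End DirC.


Section PolyIdem.
Variables (k : fieldType) (q : nat).

Lemma horner_eig (X : 'M[k]_q.+1) (v : 'cV[k]_q.+1) (p : {poly k}) :
  X *m v = v -> horner_mx X p *m v = p.[1] *: v.
Proof.
move=> Xv; elim/poly_ind: p => [|p c IH]; first by rewrite rmorph0 mul0mx horner0 scale0r.
rewrite rmorphD rmorphM /= horner_mx_X horner_mx_C mulmxDl -mulmxE -mulmxA Xv IH.
by rewrite mul_scalar_mx hornerMXaddC mulr1 scalerDl.
Qed.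

Lemma poly_idem (X : 'M[k]_q.+1) (v : 'cV[k]_q.+1) : v != 0 -> X *m v = v ->
  exists p : {poly k}, horner_mx X (p * 'X) *m horner_mx X (p * 'X) = horner_mx X (p * 'X)
     /\ horner_mx X (p * 'X) *m v = v.
Proof.
move=> v0 Xv.
set chi := char_poly X.
have chi0 : chi != 0 by apply: monic_neq0; apply: char_poly_monic.
have [m' [r' Hr' Hchi]] := multiplicity_XsubC chi 0.
move: Hr'; rewrite chi0 /= => Hr'.
rewrite polyC0 subr0 in Hchi.
have cop : coprimep ('X ^+ m'.+1) r'.
  apply: coprimep_expl; rewrite coprimep_sym.
  by rewrite -[X in coprimep _ X]subr0 -polyC0 coprimep_XsubC.
have [[u1 u2] /= Huv] := Bezout_eq1_coprimepP _ _ cop.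
exists (u1 * 'X ^+ m').
have pX : u1 * 'X ^+ m' * 'X = u1 * 'X ^+ m'.+1 by rewrite exprSr mulrA.
rewrite pX.
set P := horner_mx X (u1 * 'X ^+ m'.+1).
set Q := horner_mx X (u2 * r').
have PQ1 : P + Q = 1 by rewrite /P /Q -rmorphD Huv rmorph1.
have PQ0 : P * Q = 0.
  rewrite /P /Q -rmorphM.
  have -> : u1 * 'X ^+ m'.+1 * (u2 * r') = (u1 * u2 * 'X) * chi.
    by rewrite Hchi exprSr; ring.
  by rewrite rmorphM /= Cayley_Hamilton mulr0.
split.
  rewrite mulmxE; have -> : P * P = P * (P + Q) - P * Q by rewrite mulrDr addrK.
  by rewrite PQ1 mulr1 PQ0 subr0.
have chi1 : chi.[1] = 0.
  have := horner_eig chi Xv; rewrite Cayley_Hamilton mul0mx => /esym/eqP.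
  by rewrite scalemx_eq0 (negbTE v0) orbF => /eqP.
have Qv : Q *m v = 0.
  rewrite /Q horner_eig // hornerM.
  have : r'.[1] = 0 by move: chi1; rewrite Hchi hornerM hornerXn expr1n mulr1.
  by move=> ->; rewrite mulr0 scale0r.
have := congr1 (mulmx ^~ v) PQ1; rewrite /= mulmxDl Qv addr0 => ->.
exact: mul1mx.
Qed.
End PolyIdem.


Section Span.
Variables (k : fieldType) (G : algType k) (a b : nat) (f : G -> 'M[k]_(a, b)).

Definition spmx (s : seq G) : 'M[k]_(size s, a * b) :=
  \matrix_(i < size s) mxvec (f (nth 0 s i)).

Lemma span_fin : exists d (g : 'I_d -> G), forall x, exists c : 'I_d -> k,
  f x = \sum_(i < d) c i *: f (g i).
Proof.
suff H : forall t s, (a * b - \rank (spmx s) <= t)%N -> exists d (g : 'I_d -> G), forall x, exists c : 'I_d -> k,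
  f x = \sum_(i < d) c i *: f (g i).
  by apply: (H (a * b)%N [::]); rewrite leq_subr.
elim=> [|t IH] s Hs.
all: case: (classic (forall x, (mxvec (f x) <= spmx s)%MS)) => [Hall|Hn].
- exists (size s), (fun i => nth 0 s i) => x.
  have /submxP [w Hw] := Hall x.
  exists (fun i => w 0 i); apply: (can_inj mxvecK).
  rewrite Hw mulmx_sum_row linear_sum; apply: eq_bigr => i _.
  by rewrite linearZ rowK.
- exfalso; apply: Hn => x.
  have : (\rank (spmx s) == a * b)%N by rewrite eqn_leq rank_leq_col /=; lia.
  move=> /eqP Hr; apply: submx_full; by rewrite /row_full Hr.
- exists (size s), (fun i => nth 0 s i) => x.
  have /submxP [w Hw] := Hall x.
  exists (fun i => w 0 i); apply: (can_inj mxvecK).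
  rewrite Hw mulmx_sum_row linear_sum; apply: eq_bigr => i _.
  by rewrite linearZ rowK.
have [x Hx] : exists x, ~ (mxvec (f x) <= spmx s)%MS.
  by apply: NNPP => H; apply: Hn => x; apply: NNPP => H'; apply: H; exists x.
apply: (IH (x :: s)).
have sub : (spmx s <= spmx (x :: s))%MS.
  apply/row_subP => i; rewrite rowK.
  have -> : nth 0 s i = nth 0 (x :: s) (lift ord0 i) by [].
  by rewrite -(rowK (fun i : 'I_(size (x :: s)) => mxvec (f (nth 0 (x :: s) i)))) row_sub.
have lt : (spmx s < spmx (x :: s))%MS.
  rewrite ltmxE sub /=; apply/negP => H; apply: Hx.
  apply: submx_trans H.
  have -> : mxvec (f x) = row (ord0 : 'I_(size (x :: s))) (spmx (x :: s)) by rewrite rowK.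
  exact: row_sub.
have := rank_ltmx lt; have := rank_leq_col (spmx (x :: s)); lia.
Qed.
End Span.


Section AnnCfs.
Variables (k : fieldType) (G : algType k) (q : nat) (r : G -> 'M[k]_q.+1).
Hypothesis Rr : is_rep r.
Hypothesis Hs : forall P, submodule r P -> (forall v, P v -> v = 0) \/ (forall v, P v).
Variable J : G -> Prop.
Hypothesis hJ : ideal J.
Hypothesis Hj0 : exists j0, J j0 /\ r j0 <> 0.

Lemma trans_J (v : 'cV[k]_q.+1) : v != 0 -> forall w, exists x, J x /\ r x *m v = w.
Proof.
move=> v0.
pose P := fun w => exists x, J x /\ r x *m v = w.
have sP : submodule r P.
  split.
  - by exists 0; split; [apply: idl0 | rewrite (rep0 Rr) mul0mx].
  - move=> a u w [x1 [J1 <-]] [x2 [J2 <-]]; exists (a *: x1 + x2); split.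
      by apply: idlD => //; apply: idlZ.
    by rewrite (repD Rr) (repZ Rr) mulmxDl scalemxAl.
  - move=> y w [x1 [J1 <-]]; exists (y * x1); split; first exact: idlMl.
    by rewrite (repM Rr) mulmxA.
case: (Hs sP) => [Hz|Hall]; last exact: Hall.
pose P' := fun u : 'cV[k]_q.+1 => forall x, J x -> r x *m u = 0.
have sP' : submodule r P'.
  split.
  - by move=> x _; rewrite mulmx0.
  - move=> a u w Hu Hw x Jx; by rewrite mulmxDr -scalemxAr Hu // Hw // scaler0 addr0.
  - move=> y u Hu x Jx; rewrite mulmxA -(repM Rr) Hu //; exact: idlMr.
case: (Hs sP') => [Hz'|Hall'].
  have : v = 0 by apply: Hz' => x Jx; apply: Hz; exists x.
  by move/eqP; rewrite (negbTE v0).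
have [j0 [Jj0 nj0]] := Hj0; exfalso; apply: nj0.
by apply: mx_eq_cols => j; rewrite mul0mx; apply: Hall'.
Qed.

Lemma realize f p : exists y, r y = horner_mx (r f) p.
Proof.
elim/poly_ind: p => [|p c [y Hy]]; first by exists 0; rewrite (rep0 Rr) rmorph0.
exists (y * f + c *: 1); rewrite (repD Rr) (repZ Rr) (repM Rr) (rep1 Rr) Hy.
by rewrite rmorphD rmorphM /= horner_mx_X horner_mx_C mulmxE scalemx1.
Qed.

Lemma step e : J e -> r e *m r e = r e -> r e <> 1%:M ->
  exists e', J e' /\ r e' *m r e' = r e' /\ (\rank (r e) < \rank (r e'))%N.
Proof.
move=> Je Eid En1.
set E := r e in Eid En1 *.
have [w Hw] : exists w : 'cV_q.+1, (1%:M - E) *m w != 0.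
  apply: NNPP => H; apply: En1.
  suff : 1%:M - E = 0 by move/eqP; rewrite subr_eq0 => /eqP.
  apply: mx_eq_cols => j; rewrite mul0mx; apply/eqP; apply: NNPP => H'.
  by apply: H; exists (delta_mx j 0); apply/negP.
set v := (1%:M - E) *m w.
have E1E : E *m (1%:M - E) = 0 by rewrite mulmxBr mulmx1 Eid subrr.
have E1E' : (1%:M - E) *m E = 0 by rewrite mulmxBl mul1mx Eid subrr.
have Ev : E *m v = 0 by rewrite /v mulmxA E1E mul0mx.
have HH := trans_J Hw v. have [x [Jx Hx]] := HH.
set f := (1 - e) * x * (1 - e).
have Jf : J f by exact: (idlMr _ hJ (idlMl _ hJ Jx)).
have rf : r f = (1%:M - E) *m r x *m (1%:M - E) by rewrite /f !(repM Rr) (repB Rr) (rep1 Rr).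
have Ev' : (1%:M - E) *m v = v by rewrite mulmxBl mul1mx Ev subr0.
have Xv : r f *m v = v by rewrite rf -!mulmxA Ev' Hx Ev'.
have EX : E *m r f = 0 by rewrite rf !mulmxA E1E !mul0mx.
have XE : r f *m E = 0 by rewrite rf -mulmxA E1E' mulmx0.
have v0 : v != 0 by [].
have [p [Pid Pv]] := poly_idem v0 Xv.
have [y0 Hy0] := realize f p.
set P := horner_mx (r f) (p * 'X) in Pid Pv.
have PE1 : P = r f *m horner_mx (r f) p by rewrite /P mulrC rmorphM /= horner_mx_X mulmxE.
have PE2 : P = horner_mx (r f) p *m r f by rewrite /P rmorphM /= horner_mx_X mulmxE.
have EP : E *m P = 0 by rewrite PE1 mulmxA EX mul0mx.
have PE : P *m E = 0 by rewrite PE2 -mulmxA XE mulmx0.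
exists (e + f * y0); split; first by apply: idlD => //; apply: idlMr.
have re' : r (e + f * y0) = E + P by rewrite (repD Rr) (repM Rr) Hy0 -PE1.
rewrite re'; split.
  by rewrite mulmxDl !mulmxDr Eid EP PE Pid addr0 add0r.
apply: rank_ltmx; rewrite ltmxE; apply/andP; split.
  have HE : E *m (E + P) = E by rewrite mulmxDr Eid EP addr0.
  by rewrite -{1}HE submxMl.
apply/negP => /submxP [Z HZ].
have : (E + P) *m E = E + P by rewrite {1}HZ -mulmxA Eid -HZ.
rewrite mulmxDl Eid PE addr0 => /esym; rewrite -{2}[E]addr0 => /addrI P0.
by move: Pv; rewrite P0 mul0mx => /esym/eqP; rewrite (negbTE v0).
Qed.

Lemma one_in : exists x, J x /\ r x = 1%:M.
Proof.
suff H : forall s e, J e -> r e *m r e = r e -> (q.+1 - \rank (r e) <= s)%N ->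
    exists x, J x /\ r x = 1%:M.
  apply: (H q.+1 0); [exact: idl0 | by rewrite (rep0 Rr) mul0mx | exact: leq_subr].
elim=> [|s IH] e Je Eid Hs'.
all: case: (eqVneq (r e) 1%:M) => [h | ne]; first by exists e.
all: have [e' [Je' [Eid' lt]]] := step Je Eid (fun h => (negP ne) (introT eqP h)).
  have := rank_leq_row (r e'); lia.
apply: (IH e') => //; have := rank_leq_row (r e'); lia.
Qed.
End AnnCfs.

Section AnnCfs2.
Variables (k : fieldType) (G : algType k).

Lemma ann_cfs q (r : G -> 'M[k]_q) (A : G -> Prop) :
  simple_rep r -> (forall x, A x <-> r x = 0) -> cfs A.
Proof.
case: q r => [|q] r [Rr q0 Hs] HA; first by [].
have hA : ideal A.
  split.
  - by apply/HA; exact: (rep0 Rr).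
  - by move=> x y /HA hx /HA hy; apply/HA; rewrite (repD Rr) hx hy addr0.
  - move=> a x /HA hx; split; apply/HA; by rewrite (repM Rr) hx ?mulmx0 ?mul0mx.
split; first split.
- exact: hA.
- move=> H; have := H 1; move/HA; rewrite (rep1 Rr) => /matrixP/(_ 0 0).
  by rewrite !mxE eqxx /= => /eqP; rewrite oner_eq0.
- move=> J hJ sub.
  case: (classic (forall x, J x -> A x)) => [H|H].
    by left => x; split; [apply: H | apply: sub].
  right.
  have Hj0 : exists j0, J j0 /\ r j0 <> 0.
    apply: NNPP => H'; apply: H => x Jx; apply/HA; apply: NNPP => rx.
    by apply: H'; exists x.
  have [x [Jx rx]] := one_in Rr Hs hJ Hj0.
  apply: idl_all => //.
  have -> : (1 : G) = x + (1 - x) by rewrite addrC subrK.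
  apply: idlD => //; apply: sub; apply/HA.
  by rewrite (repB Rr) (rep1 Rr) rx subrr.
- have [d [g Hg]] := span_fin r.
  exists d, g => x; have [c Hc] := Hg x; exists c; apply/HA.
  rewrite (repB Rr) (rep_sum Rr); under eq_bigr do rewrite (repZ Rr).
  by rewrite Hc subrr.
Qed.
End AnnCfs2.


Lemma submxB_ (F : fieldType) m1 m2 n (A B : 'M[F]_(m1, n)) (C : 'M[F]_(m2, n)) :
  (A <= C)%MS -> (B <= C)%MS -> (A - B <= C)%MS.
Proof. by move=> hA hB; apply: addmx_sub => //; rewrite eqmx_opp. Qed.

Lemma zid (V : zmodType) (a b c : V) : b - c = (a - c) - (a - b).
Proof. by rewrite opprB [RHS]addrC addrA subrK. Qed.

Section Mod.
Variables (k : fieldType) (G : algType k) (n : nat) (rho : G -> 'M[k]_n).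
Hypothesis Hr : is_rep rho.

Definition sg x := (rho x)^T.
Lemma sg0 : sg 0 = 0. Proof. by rewrite /sg (rep0 Hr) trmx0. Qed.
Lemma sg1 : sg 1 = 1%:M. Proof. by rewrite /sg (rep1 Hr) trmx1. Qed.
Lemma sgM x y : sg (x * y) = sg y *m sg x. Proof. by rewrite /sg (repM Hr) trmx_mul. Qed.
Lemma sgD x y : sg (x + y) = sg x + sg y. Proof. by rewrite /sg (repD Hr) linearD. Qed.
Lemma sgZ (c : k) x : sg (c *: x) = c *: sg x. Proof. by rewrite /sg (repZ Hr) linearZ. Qed.
Lemma sg_sum d (F : 'I_d -> G) : sg (\sum_(i < d) F i) = \sum_(i < d) sg (F i).
Proof. by rewrite /sg (rep_sum Hr) linear_sum. Qed.

Definition modl (U : 'M[k]_n) := forall x, (U *m sg x <= U)%MS.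

Section Coord.
Variables (d : nat) (B : 'M[k]_(d, n)) (N : 'M[k]_n).
Hypotheses (HBf : row_free B) (HBN : (B :&: N <= (0 : 'M_n))%MS) (HN : modl N)
  (HBNm : forall x, (B *m sg x <= B + N)%MS).

Definition reprs (R : G -> 'M[k]_d) := forall x, (B *m sg x - R x *m B <= N)%MS.

Lemma uniq0 p (a : 'M[k]_(p, d)) : (a *m B <= N)%MS -> a = 0.
Proof.
move=> H; have : (a *m B <= (0 : 'M_n))%MS.
  by apply: submx_trans HBN; rewrite sub_capmx submxMl H.
by rewrite submx0 mulmx_free_eq0 // => /eqP.
Qed.

Definition coordR x := B *m sg x *m proj_mx <<B>>%MS N *m pinvmx B.

Lemma capBN : (<<B>> :&: N)%MS = 0.
Proof.
apply/eqP; rewrite -submx0; apply: submx_trans HBN.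
by apply: capmxS => //; rewrite genmxE.
Qed.

Lemma coordR_reprs : reprs coordR.
Proof.
move=> x; set X := B *m sg x.
have sXB : (X *m proj_mx <<B>>%MS N <= B)%MS.
  by apply: submx_trans (proj_mx_sub _ _ _) _; rewrite genmxE.
rewrite /coordR mulmxKpV //; apply: proj_mx_compl_sub.
by apply: submx_trans (HBNm x) _; apply: addsmxS => //; rewrite genmxE.
Qed.

Lemma reprs_diff R R' x : reprs R -> reprs R' -> (R x *m B - R' x *m B <= N)%MS.
Proof.
move=> HR HR'.
have -> : R x *m B - R' x *m B = (B *m sg x - R' x *m B) - (B *m sg x - R x *m B).
  exact: zid.
by apply: submxB_; [apply: HR' | apply: HR].
Qed.

Lemma reprs_uniq R R' x : reprs R -> reprs R' -> R x = R' x.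
Proof.
move=> HR HR'; apply/eqP; rewrite -subr_eq0; apply/eqP; apply: uniq0.
by rewrite mulmxBl; apply: reprs_diff.
Qed.

Lemma reprs_mul R x y : reprs R -> R (x * y) = R y *m R x.
Proof.
move=> HR; apply/eqP; rewrite -subr_eq0; apply/eqP; apply: uniq0.
rewrite mulmxBl.
have -> : R (x * y) *m B - R y *m R x *m B =
   (B *m sg (x * y) - R y *m R x *m B) - (B *m sg (x * y) - R (x * y) *m B).
  exact: zid.
apply: submxB_; last exact: HR.
have -> : B *m sg (x * y) - R y *m R x *m B =
    (B *m sg y - R y *m B) *m sg x + R y *m (B *m sg x - R x *m B).
  rewrite sgM mulmxBl mulmxBr !mulmxA addrA subrK //.
apply: addmx_sub.
  by apply: submx_trans (HN x); apply: submxMr; apply: HR.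
by apply: submx_trans (submxMl _ _) _; apply: HR.
Qed.

Lemma reprs_one R : reprs R -> R 1 = 1%:M.
Proof.
move=> HR; apply/eqP; rewrite -subr_eq0; apply/eqP; apply: uniq0.
rewrite mulmxBl mul1mx -opprB eqmx_opp.
by have := HR 1; rewrite sg1 mulmx1.
Qed.

Lemma reprs_lin R (c : k) x y : reprs R -> R (c *: x + y) = c *: R x + R y.
Proof.
move=> HR; apply/eqP; rewrite -subr_eq0; apply/eqP; apply: uniq0.
rewrite mulmxBl mulmxDl -scalemxAl.
have -> : R (c *: x + y) *m B - (c *: (R x *m B) + R y *m B) =
   (c *: (B *m sg x - R x *m B) + (B *m sg y - R y *m B)) - (B *m sg (c *: x + y) - R (c *: x + y) *m B).
  rewrite sgD sgZ mulmxDr -scalemxAr (zid (c *: (B *m sg x) + B *m sg y)).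
  by rewrite scalerBr addrACA opprD.
apply: submxB_; last exact: HR.
by apply: addmx_sub; [rewrite scalemx_sub // | apply: HR].
Qed.

Lemma reprs_zero R x : reprs R -> R x = 0 <-> (B *m sg x <= N)%MS.
Proof.
move=> HR; split.
  by move=> H; have := HR x; rewrite H mul0mx subr0.
move=> H; apply: uniq0.
have -> : R x *m B = B *m sg x - (B *m sg x - R x *m B) by rewrite opprB addrC subrK.
by apply: submxB_ => //; apply: HR.
Qed.

Lemma reprs_rep R : reprs R -> is_rep (fun x => (R x)^T).
Proof.
move=> HR; split.
- by move=> c x y; rewrite reprs_lin // linearD linearZ.
- by rewrite reprs_one // trmx1.
- by move=> x y; rewrite reprs_mul // trmx_mul.
Qed.

End Coord.
End Mod.


Section Mod2.
Variables (k : fieldType) (G : algType k) (n : nat) (rho : G -> 'M[k]_n).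
Hypothesis Hr : is_rep rho.
Local Notation sg := (sg rho).
Local Notation modl := (modl rho).

Section Coord2.
Variables (d : nat) (B : 'M[k]_(d, n)) (N : 'M[k]_n).
Hypotheses (HBf : row_free B) (HBN : (B :&: N <= (0 : 'M_n))%MS) (HN : modl N)
  (HBNm : forall x, (B *m sg x <= B + N)%MS).

Lemma reprs_simple R : reprs rho B N R -> (0 < d)%N ->
  (forall X : 'M_n, modl X -> (N <= X)%MS -> (X <= B + N)%MS -> (X <= N)%MS \/ (B + N <= X)%MS) ->
  simple_rep (fun x => (R x)^T).
Proof.
move=> HR d0 HS; split => //; first exact: (reprs_rep Hr HBf HBN HN HR).
move=> P [P0 Plin Pact].
case: (classic (forall v, P v -> v = 0)) => [H|H]; first by left.
right.
have [v [Pv v0]] : exists v, P v /\ v <> 0.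
  apply: NNPP => H'; apply: H => v Pv; apply: NNPP => v0; apply: H'; by exists v.
have [e [g Hg]] := span_fin sg.
set u := v^T *m B.
set C : 'M_(e, n) := \matrix_(i < e) (u *m sg (g i)).
have Cb : forall b : 'rV_e, b *m C = u *m sg (\sum_(i < e) b 0 i *: g i).
  move=> b; rewrite mulmx_sum_row (sg_sum Hr) mulmx_sumr; apply: eq_bigr => i _.
  by rewrite rowK (sgZ Hr) -scalemxAr.
have uC : forall x, (u *m sg x <= C)%MS.
  move=> x; have [c Hc] := Hg x.
  have -> : u *m sg x = (\row_i c i) *m C.
    rewrite [RHS]mulmx_sum_row Hc mulmx_sumr; apply: eq_bigr => i _.
    by rewrite rowK mxE -scalemxAr.
  exact: submxMl.
set X := (N + C)%MS.
have mX : modl X.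
  move=> y; rewrite /X addsmxMr; apply: addsmxS; first exact: HN.
  apply/row_subP => i; rewrite row_mul rowK -mulmxA -(sgM Hr); exact: uC.
have NX : (N <= X)%MS by exact: addsmxSl.
have XB : (X <= B + N)%MS.
  rewrite addsmx_sub; apply/andP; split; first exact: addsmxSr.
  apply/row_subP => i; rewrite rowK /u -mulmxA.
  by apply: submx_trans (submxMl _ _) (HBNm _).
case: (HS X mX NX XB) => [XN|BX].
  exfalso; apply: v0.
  have uN : (u <= N)%MS.
    apply: submx_trans XN; apply: submx_trans (addsmxSr N C).
    by have := uC 1; rewrite (sg1 Hr) mulmx1.
  have vt : v^T = 0 := uniq0 HBf HBN uN.
  by rewrite -[v]trmxK vt trmx0.
move=> w.
have wX : (w^T *m B <= X)%MS.
  apply: submx_trans BX; apply: submx_trans (submxMl _ _) (addsmxSl _ _).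
have [[a1 a2] /= Ha] := sub_addsmxP wX.
set gs := \sum_(i < e) a2 0 i *: g i.
have : w^T = v^T *m R gs.
  apply/eqP; rewrite -subr_eq0; apply/eqP; apply: (uniq0 HBf HBN).
  rewrite mulmxBl Ha Cb -/gs /u.
  have -> : a1 *m N + v^T *m B *m sg gs - v^T *m R gs *m B =
      a1 *m N + v^T *m (B *m sg gs - R gs *m B).
    by rewrite mulmxBr !mulmxA addrA.
  apply: addmx_sub; first exact: submxMl.
  by apply: submx_trans (submxMl _ _) (HR gs).
move=> /(congr1 trmx); rewrite trmxK trmx_mul trmxK => ->.
exact: Pact.
Qed.

End Coord2.

Definition simpq (N T : 'M[k]_n) := forall X, modl X -> (N <= X)%MS -> (X <= T)%MS ->
  (X <= N)%MS \/ (T <= X)%MS.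

Section Basis.
Variables (N T : 'M[k]_n).
Hypotheses (NT : (N <= T)%MS).

Definition bas := row_base (T :\: N)%MS.
Lemma bas_free : row_free bas. Proof. exact: row_base_free. Qed.
Lemma bas_sub : (bas <= T)%MS. Proof. by rewrite eq_row_base diffmxSl. Qed.
Lemma bas_cap : (bas :&: N <= (0 : 'M_n))%MS.
Proof. by rewrite -(capmx_diff T N); apply: capmxS; rewrite ?eq_row_base. Qed.
Lemma bas_span : (T <= bas + N)%MS.
Proof.
have := addsmx_diff_cap_eq T N => /eqmxP/andP [_ h].
by apply: submx_trans h _; apply: addsmxS; [rewrite eq_row_base | exact: capmxSr].
Qed.
Lemma bas_span' : (bas + N <= T)%MS. Proof. by rewrite addsmx_sub bas_sub NT. Qed.
Lemma bas_pos : ~~ (T <= N)%MS -> (0 < \rank (T :\: N)%MS)%N.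
Proof.
move=> TN; rewrite lt0n mxrank_eq0; apply/negP => /eqP H0; move/negP: TN; apply.
have := addsmx_diff_cap_eq T N => /eqmxP/andP [_ h].
by apply: submx_trans h _; rewrite H0 addsmx_sub sub0mx capmxSr.
Qed.
End Basis.

Lemma ann_sub N T : modl N -> modl T -> (N <= T)%MS -> ~~ (T <= N)%MS -> simpq N T ->
  cfs (fun x => (T *m sg x <= N)%MS).
Proof.
move=> HN HT NT TN HS.
have HBf := bas_free N T; have BT := bas_sub N T; have HBN := bas_cap N T.
have TBN := bas_span N T; have BNT := bas_span' NT.
have HBNm : forall x, (bas N T *m sg x <= bas N T + N)%MS.
  move=> x; apply: submx_trans (submxMr _ BT) _; exact: submx_trans (HT x) TBN.
have HR := coordR_reprs HBNm.
have HS' : forall X : 'M_n, modl X -> (N <= X)%MS -> (X <= bas N T + N)%MS ->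
    (X <= N)%MS \/ (bas N T + N <= X)%MS.
  move=> X mX NX XB; case: (HS X mX NX (submx_trans XB BNT)) => [h|h]; first by left.
  by right; apply: submx_trans BNT h.
have Sr := reprs_simple HBf HBN HN HBNm HR (bas_pos TN) HS'.
apply: (ann_cfs Sr) => x; split.
  move=> H; have : coordR rho (bas N T) N x = 0.
    by apply/(reprs_zero HBf HBN x HR); apply: submx_trans (submxMr _ BT) H.
  by move=> ->; rewrite trmx0.
move=> /(congr1 trmx); rewrite trmxK trmx0 => /(reprs_zero HBf HBN x HR) Bx.
apply: submx_trans (submxMr _ TBN) _; rewrite addsmxMr addsmx_sub Bx.
exact: HN.
Qed.

End Mod2.


Lemma is_rep_ext (k : fieldType) (G : algType k) n (f g : G -> 'M[k]_n) :
  (forall x, f x = g x) -> is_rep f -> is_rep g.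
Proof. by move=> E [h1 h2 h3]; split; move=> *; rewrite -?E. Qed.

Lemma zid4 (V : zmodType) (a b c : V) : c = a + (b + c) - a - b.
Proof. by rewrite [a + _]addrC addrK addrC addKr. Qed.

Section Bridge.
Variables (k : fieldType) (G : algType k) (n : nat) (rho : G -> 'M[k]_n).
Hypothesis Hr : is_rep rho.
Local Notation sg := (sg rho).
Local Notation modl := (modl rho).
Local Notation simpq := (simpq rho).

Lemma sub_colL (p1 p2 : nat) (A : 'M[k]_(p1, n)) (B : 'M[k]_(p2, n)) : (A <= col_mx A B)%MS.
Proof. by rewrite -addsmxE addsmxSl. Qed.
Lemma sub_colR (p1 p2 : nat) (A : 'M[k]_(p1, n)) (B : 'M[k]_(p2, n)) : (B <= col_mx A B)%MS.
Proof. by rewrite -addsmxE addsmxSr. Qed.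

Variables (m nn : G -> Prop) (N T Y : 'M[k]_n).
Hypotheses (QC : quasicommutative G) (cm : cfs m) (cnn : cfs nn) (hs : ~ same_set m nn)
  (HN : modl N) (HT : modl T) (HY : modl Y) (NT : (N <= T)%MS) (TY : (T <= Y)%MS)
  (TN : ~~ (T <= N)%MS) (YT : ~~ (Y <= T)%MS) (SN : simpq N T) (ST : simpq T Y)
  (Knn : forall x, nn x -> (T *m sg x <= N)%MS) (Km : forall x, m x -> (Y *m sg x <= T)%MS).

Let Bn := bas N T.
Let Bm := bas T Y.
Let B := col_mx Bn Bm.

Lemma Bn_T : (Bn <= T)%MS. Proof. exact: bas_sub. Qed.
Lemma Bm_Y : (Bm <= Y)%MS. Proof. exact: bas_sub. Qed.
Lemma BmT0 : (Bm :&: T <= (0 : 'M_n))%MS. Proof. exact: bas_cap. Qed.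
Lemma BnN0 : (Bn :&: N <= (0 : 'M_n))%MS. Proof. exact: bas_cap. Qed.
Lemma T_BnN : (T <= Bn + N)%MS. Proof. exact: bas_span. Qed.
Lemma Y_BmT : (Y <= Bm + T)%MS. Proof. exact: bas_span. Qed.

Lemma B_free : row_free B.
Proof.
rewrite /row_free /B -addsmxE mxrank_disjoint_sum.
  by have := bas_free N T; have := bas_free T Y; rewrite /row_free => /eqP -> /eqP ->.
apply/eqP; rewrite -submx0; apply: submx_trans BmT0.
by rewrite capmxC; apply: capmxS => //; apply: Bn_T.
Qed.

Lemma BN0 : (B :&: N <= (0 : 'M_n))%MS.
Proof.
apply: submx_trans BnN0.
rewrite sub_capmx capmxSr andbT.
have h1 : (B :&: N <= (Bn + Bm) :&: T)%MS.
  by apply: capmxS => //; rewrite /B -addsmxE.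
apply: submx_trans h1 _.
have := matrix_modl Bm Bn_T => /eqmxP/andP [_ h].
apply: submx_trans h _.
rewrite addsmx_sub submx_refl /=.
by apply: submx_trans BmT0 _; apply: sub0mx.
Qed.

Lemma T_BN : (T <= B + N)%MS.
Proof. apply: submx_trans T_BnN _; apply: addsmxS => //; exact: sub_colL. Qed.
Lemma Y_BN : (Y <= B + N)%MS.
Proof.
apply: submx_trans Y_BmT _; rewrite addsmx_sub T_BN andbT.
apply: submx_trans (sub_colR Bn Bm) _; exact: addsmxSl.
Qed.
Lemma B_Y : (B <= Y)%MS.
Proof. by rewrite -addsmxE addsmx_sub Bm_Y (submx_trans Bn_T TY). Qed.

Lemma BNm x : (B *m sg x <= B + N)%MS.
Proof.
apply: submx_trans (submxMr _ B_Y) _; exact: submx_trans (HY x) Y_BN.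
Qed.

Let R := coordR rho B N.
Lemma HR : reprs rho B N R. Proof. exact: coordR_reprs BNm. Qed.

Lemma blocks x :
  (Bn *m sg x - (ulsubmx (R x) *m Bn + ursubmx (R x) *m Bm) <= N)%MS /\
  (Bm *m sg x - (dlsubmx (R x) *m Bn + drsubmx (R x) *m Bm) <= N)%MS.
Proof.
have H := HR x.
rewrite /B mul_col_mx -[R x]submxK mul_block_col opp_col_mx add_col_mx col_mx_sub in H.
by case/andP: H.
Qed.

Lemma ur0 x : ursubmx (R x) = 0.
Proof.
apply: (uniq0 (bas_free T Y) BmT0).
have [top _] := blocks x.
set a := Bn *m sg x; set b := ulsubmx (R x) *m Bn; set c := ursubmx (R x) *m Bm.
have -> : c = (a - b) - (a - (b + c)) by rewrite opprB addrA [a - b + _]addrA subrK addrC addKr.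
apply: submxB_; last exact: submx_trans top NT.
apply: submxB_.
  by apply: submx_trans (submxMr _ Bn_T) (HT x).
by apply: submx_trans (submxMl _ _) Bn_T.
Qed.

Lemma Rn_reprs : reprs rho Bn N (fun x => ulsubmx (R x)).
Proof. by move=> x; have [top _] := blocks x; rewrite ur0 mul0mx addr0 in top. Qed.

Lemma Rm_reprs : reprs rho Bm T (fun x => drsubmx (R x)).
Proof.
move=> x; have [_ bot] := blocks x.
set a := Bm *m sg x; set c := dlsubmx (R x) *m Bn; set d := drsubmx (R x) *m Bm.
have -> : a - d = (a - (c + d)) + c by rewrite opprD addrA addrAC subrK.
apply: addmx_sub; first exact: submx_trans bot NT.
by apply: submx_trans (submxMl _ _) Bn_T.
Qed.

Lemma BnNm x : (Bn *m sg x <= Bn + N)%MS.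
Proof. apply: submx_trans (submxMr _ Bn_T) _; exact: submx_trans (HT x) T_BnN. Qed.
Lemma BmTm x : (Bm *m sg x <= Bm + T)%MS.
Proof. apply: submx_trans (submxMr _ Bm_Y) _; exact: submx_trans (HY x) Y_BmT. Qed.

Lemma Srn : simple_rep (fun x => (ulsubmx (R x))^T).
Proof.
apply: (reprs_simple Hr (bas_free N T) BnN0 HN BnNm Rn_reprs (bas_pos TN)).
move=> X mX NX XB; have BNT := bas_span' NT.
case: (SN mX NX (submx_trans XB BNT)) => [h|h]; first by left.
by right; apply: submx_trans BNT h.
Qed.

Lemma Srm : simple_rep (fun x => (drsubmx (R x))^T).
Proof.
apply: (reprs_simple Hr (bas_free T Y) BmT0 HT BmTm Rm_reprs (bas_pos YT)).
move=> X mX NX XB; have BNT := bas_span' TY.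
case: (ST mX NX (submx_trans XB BNT)) => [h|h]; first by left.
by right; apply: submx_trans BNT h.
Qed.

Lemma bridge : exists Z : 'M[k]_n, [/\ modl Z, (N <= Z)%MS, (Z <= Y)%MS,
  (Z :&: T <= N)%MS & (Y <= Z + T)%MS].
Proof.
have Am : annihilated (fun x => (drsubmx (R x))^T) m.
  move=> x mx; have -> : drsubmx (R x) = 0; last by rewrite trmx0.
  apply/(reprs_zero (bas_free T Y) BmT0 x Rm_reprs).
  by apply: submx_trans (submxMr _ Bm_Y) (Km mx).
have An : annihilated (fun x => (ulsubmx (R x))^T) nn.
  move=> x nx; have -> : ulsubmx (R x) = 0; last by rewrite trmx0.
  apply/(reprs_zero (bas_free N T) BnN0 x Rn_reprs).
  by apply: submx_trans (submxMr _ Bn_T) (Knn nx).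
have Et : forall x, (R x)^T = block_mx (ulsubmx (R x))^T (dlsubmx (R x))^T 0 (drsubmx (R x))^T.
  by move=> x; rewrite -{1}[R x]submxK tr_block_mx ur0 trmx0.
have HE := is_rep_ext Et (reprs_rep Hr B_free BN0 HN HR).
have [s [Hs1 Hs2]] := QC cm cnn hs Srm Am Srn An HE.
have sR : forall x, s^T *m R x = drsubmx (R x) *m s^T.
  move=> x; apply: trmx_inj; rewrite [LHS]trmx_mul [RHS]trmx_mul !trmxK Et; exact: Hs1.
set S := s^T *m B.
have SB : S = (usubmx s)^T *m Bn + Bm.
  by rewrite /S -[s]vsubmxK tr_col_mx col_mxKu Hs2 trmx1 /B mul_row_col mul1mx.
exists (N + S)%MS; split.
- move=> x; rewrite addsmxMr addsmx_sub; apply/andP; split.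
    by apply: submx_trans (HN x) _; apply: addsmxSl.
  have -> : S *m sg x = drsubmx (R x) *m S + s^T *m (B *m sg x - R x *m B).
    have := sR x; rewrite /S; move: (R x) (drsubmx (R x)) => Rx Dx sRx.
    by rewrite mulmxBr !mulmxA sRx addrC subrK.
  apply: addmx_sub; first by apply: submx_trans (submxMl _ _) (addsmxSr _ _).
  apply: submx_trans (submxMl _ _) _; apply: submx_trans (HR x) _; exact: addsmxSl.
- exact: addsmxSl.
- by rewrite addsmx_sub (submx_trans NT TY) /S (submx_trans (submxMl _ _) B_Y).
- set W := ((N + S) :&: T)%MS.
  have WZ : (W <= N + S)%MS by apply: capmxSl.
  have WT : (W <= T)%MS by apply: capmxSr.
  have [[a b] /= Hab] := sub_addsmxP WZ.
  have b0 : b = 0.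
    apply: (uniq0 (bas_free T Y) BmT0).
    have -> : b *m Bm = W - a *m N - b *m ((usubmx s)^T *m Bn).
      by rewrite Hab SB mulmxDr -zid4.
    apply: submxB_; first apply: submxB_ => //.
      exact: submx_trans (submxMl _ _) NT.
    exact: submx_trans (submxMl _ _) (submx_trans (submxMl _ _) Bn_T).
  by rewrite Hab b0 mul0mx addr0 submxMl.
- apply: submx_trans Y_BmT _; rewrite addsmx_sub addsmxSr andbT.
  have -> : Bm = S - (usubmx s)^T *m Bn by rewrite SB addrC addKr.
  apply: submxB_.
    by apply: submx_trans (addsmxSl _ T); apply: addsmxSr.
  apply: submx_trans (addsmxSr (N + S)%MS T).
  exact: submx_trans (submxMl _ _) Bn_T.
Qed.

End Bridge.


Section Devis.
Variables (k : fieldType) (G : algType k) (n : nat) (rho : G -> 'M[k]_n).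
Hypothesis Hr : is_rep rho.
Local Notation sg := (sg rho).
Local Notation modl := (modl rho).
Local Notation simpq := (simpq rho).

Lemma modl_cap X Y : modl X -> modl Y -> modl (X :&: Y)%MS.
Proof.
move=> hX hY x; rewrite sub_capmx; apply/andP; split.
  by apply: submx_trans (submxMr _ (capmxSl _ _)) (hX x).
by apply: submx_trans (submxMr _ (capmxSr _ _)) (hY x).
Qed.

Lemma minimal N U : modl U -> (N <= U)%MS -> ~~ (U <= N)%MS ->
  exists T, [/\ modl T, (N <= T)%MS, (T <= U)%MS, ~~ (T <= N)%MS & simpq N T].
Proof.
move=> mU NU UN.
suff H : forall r T, (\rank T <= r)%N -> modl T -> (N <= T)%MS -> (T <= U)%MS -> ~~ (T <= N)%MS ->
  exists T, [/\ modl T, (N <= T)%MS, (T <= U)%MS, ~~ (T <= N)%MS & simpq N T].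
  exact: (H (\rank U) U (leqnn _)).
elim=> [|r IH] T rT mT NT TU TN.
  exfalso; move/negP: TN; apply; move: rT; rewrite leqn0 mxrank_eq0 => /eqP ->.
  exact: sub0mx.
case: (classic (simpq N T)) => [S|nS]; first by exists T.
have [X [mX NX XT XN TX]] : exists X, [/\ modl X, (N <= X)%MS, (X <= T)%MS, ~~ (X <= N)%MS & ~~ (T <= X)%MS].
  apply: NNPP => H; apply: nS => X mX NX XT.
  case: (boolP (X <= N)%MS) => [h|h]; first by left.
  case: (boolP (T <= X)%MS) => [h'|h']; first by right.
  by exfalso; apply: H; exists X.
have lt : (\rank X < \rank T)%N by apply: rank_ltmx; rewrite ltmxE XT.
apply: (IH X) => //; first lia.
exact: submx_trans XT TU.
Qed.

Lemma devis (QC : quasicommutative G) m nn : cfs m -> cfs nn -> ~ same_set m nn ->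
  forall e t N T Y, (\rank Y - \rank T <= t)%N -> modl N -> modl T -> modl Y ->
  (N <= T)%MS -> (T <= Y)%MS -> ~~ (T <= N)%MS -> simpq N T ->
  (forall x, nn x -> (T *m sg x <= N)%MS) -> (forall x, idpow m e x -> (Y *m sg x <= T)%MS) ->
  exists Z, [/\ modl Z, (N <= Z)%MS, (Z <= Y)%MS, (Z :&: T <= N)%MS & (Y <= Z + T)%MS].
Proof.
move=> cm cnn hs e; elim=> [|t IH] N T Y rt HN HT HY NT TY TN SN Knn Km.
all: case: (boolP (Y <= T)%MS) => [YT|YT].
- exists N; split => //; [exact: submx_trans NT TY | exact: capmxSl |].
  by apply: submx_trans YT _; apply: addsmxSr.
- have [Y1 [mY1 TY1 Y1Y Y1T _]] := minimal HY TY YT.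
  have lt : (\rank T < \rank Y1)%N by apply: rank_ltmx; rewrite ltmxE TY1.
  have := mxrankS Y1Y; lia.
- exists N; split => //; [exact: submx_trans NT TY | exact: capmxSl |].
  by apply: submx_trans YT _; apply: addsmxSr.
have [Y1 [mY1 TY1 Y1Y Y1T S1]] := minimal HY TY YT.
have lt : (\rank T < \rank Y1)%N by apply: rank_ltmx; rewrite ltmxE TY1.
have le := mxrankS Y1Y.
have Km1 : forall x, m x -> (Y1 *m sg x <= T)%MS.
  have ca := ann_sub Hr HT mY1 TY1 Y1T S1.
  have mc : max_ideal (fun x => (Y1 *m sg x <= T)%MS) by case: ca.
  have im : ideal m by case: cm => [[]].
  apply: (max_pow mc im (e := e)) => x Hx /=.
  by apply: submx_trans (submxMr _ Y1Y) (Km _ Hx).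
have [Z1 [mZ1 NZ1 Z1Y1 Z1T Y1Z1]] := bridge Hr QC cm cnn hs HN HT mY1 NT TY1 TN Y1T SN S1 Knn Km1.
have Y1Z1' : ~~ (Y1 <= Z1)%MS.
  apply/negP => h; move/negP: TN; apply; apply: submx_trans Z1T.
  by rewrite sub_capmx submx_refl andbT (submx_trans TY1 h).
have S2 : simpq Z1 Y1.
  move=> X mX Z1X XY1.
  have NX : (N <= X :&: T)%MS by rewrite sub_capmx NT (submx_trans NZ1 Z1X).
  case: (SN _ (modl_cap mX HT) NX (capmxSr _ _)) => [h|h].
    left.
    have := matrix_modl T Z1X => /eqmxP/andP [_ h1].
    have : (X <= (Z1 + T) :&: X)%MS by rewrite sub_capmx submx_refl andbT (submx_trans XY1 Y1Z1).
    move=> h2; apply: submx_trans h2 _; apply: submx_trans h1 _.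
    rewrite addsmx_sub submx_refl /=; apply: submx_trans NZ1.
    by rewrite capmxC.
  right; apply: submx_trans Y1Z1 _; rewrite addsmx_sub Z1X /=.
  by apply: submx_trans h (capmxSl _ _).
have Knn2 : forall x, nn x -> (Y1 *m sg x <= Z1)%MS.
  move=> x nx; apply: submx_trans (submxMr _ Y1Z1) _.
  rewrite addsmxMr addsmx_sub (mZ1 x) /=.
  exact: submx_trans (Knn _ nx) NZ1.
have Km2 : forall x, idpow m e x -> (Y *m sg x <= Y1)%MS.
  by move=> x Hx; apply: submx_trans (Km _ Hx) TY1.
have [Z [mZ Z1Z ZY ZY1 YZ]] := IH Z1 Y1 Y ltac:(lia) mZ1 mY1 HY Z1Y1 Y1Y Y1Z1' S2 Knn2 Km2.
exists Z; split => //.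
- exact: submx_trans NZ1 Z1Z.
- apply: submx_trans Z1T; rewrite sub_capmx capmxSr andbT.
  apply: submx_trans ZY1; exact: capmxS.
- apply: submx_trans YZ _; rewrite addsmx_sub addsmxSl /=.
  apply: submx_trans Y1Z1 _; exact: addsmxS.
Qed.

End Devis.


Lemma sum_ext (V : zmodType) l (F : 'I_l -> V) (a : V) :
  \sum_(i < l.+1) oapp F a (unlift ord_max i) = \sum_(i < l) F i + a.
Proof.
rewrite big_ord_recr /= unlift_none /=; congr (_ + _); apply: eq_bigr => j _.
have -> : widen_ord (leqnSn l) j = lift ord_max j.
  by apply: val_inj; rewrite /= /bump leqNgt ltn_ord.
by rewrite liftK.
Qed.

Section Main.
Variables (k : fieldType) (G : algType k) (n : nat) (rho : G -> 'M[k]_n).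
Hypothesis Hr : is_rep rho.
Local Notation sg := (sg rho).
Local Notation modl := (modl rho).
Local Notation simpq := (simpq rho).

Definition gwr (N : 'M[k]_n) (m : G -> Prop) (w : 'rV[k]_n) :=
  exists e, forall x, idpow m e x -> (w *m sg x <= N)%MS.

Definition Qd (N : 'M[k]_n) := forall w : 'rV[k]_n, exists l (ms : 'I_l -> G -> Prop) (ws : 'I_l -> 'rV[k]_n),
  (forall i, cfs (ms i) /\ gwr N (ms i) (ws i)) /\ (w - \sum_(i < l) ws i <= N)%MS.


Lemma gwr_same (N : 'M[k]_n) m m' w : same_set m m' -> gwr N m w -> gwr N m' w.
Proof.
move=> hs [e H]; exists e => x Hx; apply: H; apply: idpow_same Hx.
by move=> z; split => /hs.
Qed.

Lemma gwr_lift (N T : 'M[k]_n) nn (w : 'rV[k]_n) e : (forall x, nn x -> (T *m sg x <= N)%MS) ->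
  (forall x, idpow nn e x -> (w *m sg x <= T)%MS) ->
  forall x, idpow nn e.+1 x -> (w *m sg x <= N)%MS.
Proof.
move=> Kn Hw x /=; elim=> [|a b na Hb|u v _ Hu _ Hv].
- by rewrite (sg0 Hr) mulmx0 sub0mx.
- rewrite (sgM Hr) mulmxA; apply: submx_trans (submxMr _ (Hw _ Hb)) (Kn _ na).
- by rewrite (sgD Hr) mulmxDr addmx_sub.
Qed.

Section Step.
Variables (N T : 'M[k]_n).
Hypotheses (QC : quasicommutative G) (HN : modl N) (HT : modl T) (NT : (N <= T)%MS)
  (TN : ~~ (T <= N)%MS) (SN : simpq N T).

Let nn := fun x => (T *m sg x <= N)%MS.
Lemma cnn : cfs nn. Proof. rewrite /nn; exact: (ann_sub Hr HN HT NT TN SN). Qed.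

Lemma lift_one m w : cfs m -> gwr T m w -> exists z, gwr N m z /\ (w - z <= T)%MS.
Proof.
move=> cm [e He].
have im : ideal m by case: cm => [[]].
case: (classic (same_set m nn)) => [hs|hs].
  exists w; split; last by rewrite subrr sub0mx.
  apply: (gwr_same (m := nn)); first by move=> x; split => /hs.
  exists e.+1; apply: (gwr_lift (T := T)) => // x Hx.
  by apply: He; apply: idpow_same Hx => z; split => /hs.
have [d [g Hg]] := span_fin sg.
set C : 'M_(d, n) := \matrix_(j < d) (w *m sg (g j)).
have wC : forall x, (w *m sg x <= C)%MS.
  move=> x; have [c Hc] := Hg x.
  have -> : w *m sg x = (\row_i c i) *m C.
    rewrite [RHS]mulmx_sum_row Hc mulmx_sumr; apply: eq_bigr => i _.
    by rewrite rowK mxE -scalemxAr.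
  exact: submxMl.
set Y := (T + C)%MS.
have mY : modl Y.
  move=> y; rewrite /Y addsmxMr; apply: addsmxS; first exact: HT.
  apply/row_subP => i; rewrite row_mul rowK -mulmxA -(sgM Hr); exact: wC.
have TY : (T <= Y)%MS by exact: addsmxSl.
have wY : (w <= Y)%MS.
  apply: submx_trans (addsmxSr T C); by have := wC 1; rewrite (sg1 Hr) mulmx1.
have Km : forall x, idpow m e x -> (Y *m sg x <= T)%MS.
  move=> x Hx; rewrite /Y addsmxMr addsmx_sub (HT x) /=.
  apply/row_subP => i; rewrite row_mul rowK -mulmxA -(sgM Hr); apply: He.
  by apply: (idlMr _ (idpow_ideal e im)).
have [Z [mZ NZ ZY ZT YZ]] := devis Hr QC cm cnn hs (t := (\rank Y - \rank T)%N) (leqnn _) HN HT mY NT TY TN SN (fun x h => h) Km.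
have [[a b] /= Hab] := sub_addsmxP (submx_trans wY YZ).
exists (a *m Z); split.
  exists e => x Hx; apply: submx_trans ZT; rewrite sub_capmx; apply/andP; split.
    by rewrite -mulmxA; apply: submx_trans (submxMl _ _) (mZ x).
  have -> : a *m Z *m sg x = w *m sg x - b *m T *m sg x by rewrite Hab mulmxDl addrK.
  apply: submxB_; first by apply: submx_trans (submxMr _ wY) (Km _ Hx).
  by rewrite -mulmxA; apply: submx_trans (submxMl _ _) (HT x).
by rewrite Hab addrC addKr submxMl.
Qed.

Lemma Qd_step : Qd T -> Qd N.
Proof.
move=> QT w; have [l [ms [ws [Hw Hs]]]] := QT w.
have Hz : forall i, exists z, gwr N (ms i) z /\ (ws i - z <= T)%MS.
  by move=> i; have [c g] := Hw i; apply: lift_one.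
have [z Hz'] := fin_all_exists Hz.
set t0 := w - \sum_(i < l) z i.
have t0T : (t0 <= T)%MS.
  have -> : t0 = (w - \sum_(i < l) ws i) + \sum_(i < l) (ws i - z i).
    by rewrite sumrB addrA subrK.
  apply: addmx_sub => //; apply: summx_sub => i _; by case: (Hz' i).
exists l.+1, (fun i => oapp ms nn (unlift ord_max i)), (fun i => oapp z t0 (unlift ord_max i)).
split.
  move=> i; case: (unliftP ord_max i) => [j _|_] /=.
    by split; [case: (Hw j) | case: (Hz' j)].
  split; first exact: cnn.
  exists 1%N => x Hx; apply: submx_trans (submxMr _ t0T) _.
  by apply: (idpow1 (m := nn)) => //; case: cnn => [[]].
rewrite sum_ext; have -> : \sum_(i < l) z i + t0 = w by rewrite /t0 addrC subrK.
by rewrite subrr sub0mx.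
Qed.
End Step.

Lemma Qd_all (QC : quasicommutative G) : forall N, modl N -> Qd N.
Proof.
suff H : forall r N, (n - \rank N <= r)%N -> modl N -> Qd N.
  by move=> N; apply: (H n); rewrite leq_subr.
elim=> [|r IH] N rN mN.
all: case: (boolP (1%:M <= N)%MS) => [full|nfull].
- move=> w; exists 0%N, (fun _ => fun _ => True), (fun _ => 0); split; first by case.
  by rewrite big_ord0 subr0 (submx_trans (submx1 _) full).
- exfalso; move/negP: nfull; apply; apply: submx_full.
  by rewrite /row_full eqn_leq rank_leq_col /=; lia.
- move=> w; exists 0%N, (fun _ => fun _ => True), (fun _ => 0); split; first by case.
  by rewrite big_ord0 subr0 (submx_trans (submx1 _) full).
have m1 : modl 1%:M by move=> x; apply: submx1.
have [T [mT NT T1 TN ST]] := minimal m1 (submx1 N) nfull.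
apply: (Qd_step QC mN mT NT TN ST); apply: IH => //.
have lt : (\rank N < \rank T)%N by apply: rank_ltmx; rewrite ltmxE NT.
have := rank_leq_col T; lia.
Qed.
End Main.


Lemma dirB (k : fieldType) (G : algType k) : quasicommutative G ->
  forall (n : nat) (rho : G -> 'M[k]_n), is_rep rho -> gen_weight rho.
Proof.
move=> QC n rho Hr; split.
  move=> v.
  have m0 : modl rho 0 by move=> x; rewrite mul0mx sub0mx.
  have [l [ms [ws [Hw Hs]]]] := Qd_all Hr QC m0 v^T.
  exists l, ms, (fun i => (ws i)^T); split.
    move=> i; have [c [e He]] := Hw i; split => //; exists e => x Hx.
    have := He x Hx; rewrite submx0 => /eqP H.
    by rewrite -[rho x]trmxK -trmx_mul -/(sg rho x) H trmx0.
  move: Hs; rewrite submx0 subr_eq0 => /eqP Hs.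
  by rewrite -[v]trmxK Hs linear_sum.
move=> l ms ws Hd Hw Hs; apply: (gw_direct Hr Hd) => // i.
by have [c g] := Hw i; split => //; case: c.
Qed.

Theorem mainTheorem9 (k : fieldType) (G : algType k) :
  quasicommutative G <->
  (forall (n : nat) (rho : G -> 'M[k]_n), is_rep rho -> gen_weight rho).
Proof. split; [exact: dirB | exact: dirC]. Qed.
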